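(* Let $G$ be a subgroup of $\mathrm{Sp}(n,1)$ containing $d_n=\mathrm{diag}(1,\dots,1,i)$. Then for every $g\in\mathrm{Sp}(n,1)$, the set of traces of the elements of $gGg^{-1}$ is not contained in $\mathbb R$.
   Context: $\mathbb H$ denotes the quaternions, with units $i,j,k$. $\mathrm{Sp}(n,1)=\{A\in\mathrm{GL}(n+1,\mathbb H): A^*I_{n,1}A=I_{n,1}\}$ with $A^*$ the conjugate transpose and $I_{n,1}=\mathrm{diag}(1,\dots,1,-1)$. $d_n$ is the $(n+1)\times(n+1)$ diagonal matrix with diagonal entries $1,\dots,1,i$ (in this order). The trace of a quaternionic matrix is the sum of its diagonal entries. *)

(* Defs.v *)
From HB Require Import structures.
From mathcomp Require Import all_boot all_order all_algebra.
From mathcomp Require Import reals.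
From mathcomp Require Import ring.
Set Implicit Arguments. Unset Strict Implicit. Unset Printing Implicit Defensive.
Import Order.TTheory GRing.Theory Num.Theory.
Local Open Scope ring_scope.

Section Quaternions.
Variable R : comNzRingType.

(* a quaternion q0 + q1 i + q2 j + q3 k *)
Record quat := Quat { q0 : R; q1 : R; q2 : R; q3 : R }.

Definition quat2tuple (q : quat) := (q0 q, q1 q, q2 q, q3 q).
Definition tuple2quat (t : R * R * R * R) :=
  let: (a, b, c, d) := t in Quat a b c d.
Lemma quat2tupleK : cancel quat2tuple tuple2quat. Proof. by case. Qed.

HB.instance Definition _ := Choice.copy quat (can_type quat2tupleK).

Lemma quat_eq a b c d a' b' c' d' :
  a = a' -> b = b' -> c = c' -> d = d' -> Quat a b c d = Quat a' b' c' d'.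
Proof. by move=> -> -> -> ->. Qed.

Definition qzero := Quat 0 0 0 0.
Definition qopp q := Quat (- q0 q) (- q1 q) (- q2 q) (- q3 q).
Definition qadd p q := Quat (q0 p + q0 q) (q1 p + q1 q) (q2 p + q2 q) (q3 p + q3 q).

Lemma qaddA : associative qadd.
Proof. by case=> ????[????][????]; rewrite /qadd /=; apply: quat_eq; ring. Qed.
Lemma qaddC : commutative qadd.
Proof. by case=> ????[????]; rewrite /qadd /=; apply: quat_eq; ring. Qed.
Lemma qadd0 : left_id qzero qadd.
Proof. by case=> ????; rewrite /qadd /=; apply: quat_eq; ring. Qed.
Lemma qaddN : left_inverse qzero qopp qadd.
Proof. by case=> ????; rewrite /qadd /=; apply: quat_eq; ring. Qed.

HB.instance Definition _ := GRing.isZmodule.Build quat qaddA qaddC qadd0 qaddN.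

Definition qone := Quat 1 0 0 0.
(* Hamilton product, with i^2 = j^2 = k^2 = ijk = -1 *)
Definition qmul p q := Quat
  (q0 p * q0 q - q1 p * q1 q - q2 p * q2 q - q3 p * q3 q)
  (q0 p * q1 q + q1 p * q0 q + q2 p * q3 q - q3 p * q2 q)
  (q0 p * q2 q - q1 p * q3 q + q2 p * q0 q + q3 p * q1 q)
  (q0 p * q3 q + q1 p * q2 q - q2 p * q1 q + q3 p * q0 q).


Lemma qmulA : associative qmul.
Proof. by case=> ????[????][????]; rewrite /qmul /=; apply: quat_eq; ring. Qed.
Lemma qmul1 : left_id qone qmul.
Proof. by case=> ????; rewrite /qmul /=; apply: quat_eq; ring. Qed.
Lemma qmulr1 : right_id qone qmul.
Proof. by case=> ????; rewrite /qmul /=; apply: quat_eq; ring. Qed.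
Lemma qmulDl : left_distributive qmul qadd.
Proof. by case=> ????[????][????]; rewrite /qmul /qadd /=; apply: quat_eq; ring. Qed.
Lemma qmulDr : right_distributive qmul qadd.
Proof. by case=> ????[????][????]; rewrite /qmul /qadd /=; apply: quat_eq; ring. Qed.
Lemma qone_neq0 : qone != 0.
Proof. apply/negP => /eqP [] /eqP; by rewrite oner_eq0. Qed.

HB.instance Definition _ :=
  GRing.Zmodule_isNzRing.Build quat qmulA qmul1 qmulr1 qmulDl qmulDr qone_neq0.

Definition qconj q := Quat (q0 q) (- q1 q) (- q2 q) (- q3 q).
Definition qi := Quat 0 1 0 0.
Definition qreal (q : quat) : Prop := q1 q = 0 /\ q2 q = 0 /\ q3 q = 0.

End Quaternions.

Section SpN1.
Variable R : comNzRingType.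
Variable n : nat.
Local Notation M := 'M[quat R]_(n.+1).

Definition ctrmx (A : M) : M := (map_mx (@qconj R) A)^T.

Definition Jn1 : M := diag_mx (\row_(i < n.+1) if i == ord_max then -1 else 1).

Definition dn : M := diag_mx (\row_(i < n.+1) if i == ord_max then qi R else 1).

Definition invertible (A : M) : Prop := exists B : M, A * B = 1 /\ B * A = 1.

Definition Sp_n1 (A : M) : Prop := invertible A /\ ctrmx A * Jn1 * A = Jn1.

Definition subgroup_Sp (G : M -> Prop) : Prop :=
  (forall A, G A -> Sp_n1 A) /\ G 1 /\
  (forall A B, G A -> G B -> G (A * B)) /\
  (forall A, G A -> exists B, G B /\ A * B = 1 /\ B * A = 1).

End SpN1.

(* Main.v *)
Require Import Defs.
From HB Require Import structures.
From mathcomp Require Import all_boot all_order all_algebra.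
From mathcomp Require Import reals ring lra.
Import Order.TTheory GRing.Theory Num.Theory.
Set Implicit Arguments. Unset Strict Implicit.
Local Open Scope ring_scope.

Lemma qmulE (R : comNzRingType) (x y : quat R) : x * y = qmul x y. Proof. by []. Qed.
Lemma qaddE (R : comNzRingType) (x y : quat R) : x + y = qadd x y. Proof. by []. Qed.
Lemma qoppE (R : comNzRingType) (x : quat R) : - x = qopp x. Proof. by []. Qed.
Lemma qoneE (R : comNzRingType) : 1 = qone R. Proof. by []. Qed.
Lemma qzeroE (R : comNzRingType) : 0 = qzero R. Proof. by []. Qed.
Definition qE := (qmulE, qaddE, qoppE, qoneE, qzeroE).

Definition nsq (R : comNzRingType) (x : quat R) := q0 x ^+ 2 + q1 x ^+ 2 + q2 x ^+ 2 + q3 x ^+ 2.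

Lemma lin1 (R : comNzRingType) (p v : quat R) :
  q1 (qconj p * v * p) = q0 v * q1 (qconj p * Quat 1 0 0 0 * p) + q1 v * q1 (qconj p * Quat 0 1 0 0 * p)
     + q2 v * q1 (qconj p * Quat 0 0 1 0 * p) + q3 v * q1 (qconj p * Quat 0 0 0 1 * p).
Proof. case: p v => ????[????]; rewrite !qE /=; ring. Qed.

Lemma Lm (R : comNzRingType) (p : quat R) :
  q1 (qconj p * (p * qi R * qconj p) * p) = nsq p ^+ 2.
Proof. case: p => ????; rewrite /nsq !qE /=; ring. Qed.

Lemma Lbound (R : realDomainType) (p x : quat R) :
  q1 (qconj p * (x * qi R * qconj x) * p) <= nsq p * nsq x.
Proof.
have -> : q1 (qconj p * (x * qi R * qconj x) * p) = nsq p * nsq x - 2 * (q2 (qconj p * x) ^+ 2 + q3 (qconj p * x) ^+ 2).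
  by case: p x => ????[????]; rewrite /nsq !qE /=; ring.
rewrite lerBlDr lerDl; apply: mulr_ge0 => //; apply: addr_ge0; apply: sqr_ge0.
Qed.

Lemma q0V (R : comNzRingType) (x : quat R) : q0 (x * qi R * qconj x) = 0.
Proof. case: x => ????; rewrite !qE /=; ring. Qed.

Lemma q0col (R : comNzRingType) (x : quat R) (b : bool) :
  q0 (qconj x * (if b then -1 else 1) * x) = (if b then -1 else 1) * nsq x.
Proof. case: b; case: x => ????; rewrite /nsq !qE /=; ring. Qed.

Lemma qX (R : comNzRingType) (x : quat R) (b : bool) (c : quat R -> R) :
  c = @q1 R \/ c = @q2 R \/ c = @q3 R ->
  c (x * (qi R - 1) * (- qconj x * (if b then -1 else 1))) =
  - (if b then -1 else 1) * c (x * qi R * qconj x).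
Proof. by case=> [|[]] ->; case: b; case: x => ????; rewrite !qE /=; ring. Qed.

Lemma qc_sum (R : comNzRingType) (c : quat R -> R) (I : finType) (P : pred I) (F : I -> quat R) :
  c = @q0 R \/ c = @q1 R \/ c = @q2 R \/ c = @q3 R ->
  c (\sum_(i | P i) F i) = \sum_(i | P i) c (F i).
Proof.
move=> hc; apply: (big_morph c); last by case: hc => [|[|[]]] ->.
by case: hc => [|[|[]]] -> [????] [????].
Qed.

Lemma qcD (R : comNzRingType) (c : quat R -> R) (x y : quat R) :
  c = @q0 R \/ c = @q1 R \/ c = @q2 R \/ c = @q3 R -> c (x + y) = c x + c y.
Proof. by case=> [|[|[]]] ->; case: x y => ????[????]. Qed.

Lemma qc1 (R : comNzRingType) (c : quat R -> R) :
  c = @q1 R \/ c = @q2 R \/ c = @q3 R -> c 1 = 0.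
Proof. by case=> [|[]] ->. Qed.

Lemma nsq_ge0 (R : realDomainType) (x : quat R) : 0 <= nsq x.
Proof. by rewrite /nsq; do ! apply: addr_ge0; apply: sqr_ge0. Qed.

Theorem proposition4p10 (R : realType) (n : nat)
    (G : 'M[quat R]_(n.+1) -> Prop) :
  subgroup_Sp G -> G (dn R n) ->
  forall g ginv : 'M[quat R]_(n.+1),
    Sp_n1 g -> g * ginv = 1 -> ginv * g = 1 ->
    exists A, G A /\ ~ qreal (\tr (g * A * ginv)).
Proof.
move=> _ Hd g ginv [_ Hg] Hgi Hig.
exists (dn R n); split=> //; move=> Hreal.
set m := @ord_max n.
set e := fun k : 'I_n.+1 => (if k == m then -1 else 1 : quat R).
have JJ : Jn1 R n * Jn1 R n = 1.
  rewrite /Jn1 -mulmxE mul_diag_mx; apply/matrixP=> i j; rewrite !mxE.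
  by case: (i == m); case: (i == j); rewrite ?mulr0 ?mulN1r ?opprK ?mul1r.
have H1 : ctrmx g * Jn1 R n = Jn1 R n * ginv.
  by rewrite -[LHS]mulr1 -Hgi mulrA Hg.
have Hginv : forall k, ginv m k = - qconj (g k m) * e k.
  move=> k; have -> : ginv = Jn1 R n * ctrmx g * Jn1 R n.
    by rewrite -mulrA H1 mulrA JJ mul1r.
  rewrite /Jn1 -!mulmxE mul_mx_diag mxE mul_diag_mx !mxE eqxx.
  by rewrite mulN1r.
have Hcol : \sum_k qconj (g k m) * e k * g k m = -1.
  have := congr1 (fun M : 'M[quat R]_(n.+1) => M m m) Hg; rewrite /= -!mulmxE !mxE !eqxx mulr1n => <-.
  by apply: eq_bigr => k _; rewrite /Jn1 mul_mx_diag !mxE.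
have Htr : forall k, (g * dn R n * ginv) k k = 1 + g k m * (qi R - 1) * ginv m k.
  move=> k; have := congr1 (fun M : 'M[quat R]_(n.+1) => M k k) Hgi; rewrite /= -!mulmxE !mxE eqxx mulr1n => HH; rewrite -{1}HH.
  rewrite /dn mul_mx_diag.
  rewrite (eq_bigr (fun j => g k j * ginv j k + g k j * ((\row_(i < n.+1) if i == m then qi R else 1) 0 j - 1) * ginv j k)); last first.
    by move=> j _; rewrite !mxE mulrBr mulr1 mulrBl addrC subrK.
  rewrite big_split /=; congr (_ + _).
  rewrite (bigD1 m) //= big1 ?addr0 ?mxE ?eqxx // => j /negbTE hj.
  by rewrite mxE hj subrr mulr0 mul0r.
set q := fun k => g k m.
set er := fun k : 'I_n.+1 => (if k == m then -1 else 1 : R).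
have HS : forall c, c = @q1 R \/ c = @q2 R \/ c = @q3 R ->
    \sum_k er k * c (q k * qi R * qconj (q k)) = 0.
  move=> c hc.
  have hc' : c = @q0 R \/ c = @q1 R \/ c = @q2 R \/ c = @q3 R by right.
  have h0 : c (\tr (g * dn R n * ginv)) = 0.
    by case: Hreal => [h1 [h2 h3]]; case: hc => [|[]] ->.
  rewrite /mxtrace qc_sum // in h0.
  suff -> : \sum_k er k * c (q k * qi R * qconj (q k)) =
      - \sum_k c ((g * dn R n * ginv) k k) by rewrite h0 oppr0.
  rewrite -sumrN; apply: eq_bigr => k _.
  rewrite Htr Hginv qcD // qc1 // add0r /e qX //.
  by rewrite /er mulNr opprK.
have HL : \sum_k er k * q1 (qconj (q m) * (q k * qi R * qconj (q k)) * q m) = 0.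
  rewrite (eq_bigr (fun k =>
     q1 (qconj (q m) * Quat 0 1 0 0 * q m) * (er k * q1 (q k * qi R * qconj (q k))) +
     q1 (qconj (q m) * Quat 0 0 1 0 * q m) * (er k * q2 (q k * qi R * qconj (q k))) +
     q1 (qconj (q m) * Quat 0 0 0 1 * q m) * (er k * q3 (q k * qi R * qconj (q k))))).
    rewrite !big_split /= -!mulr_sumr.
    rewrite (HS (@q1 R)); last by left.
    rewrite (HS (@q2 R)); last by right; left.
    rewrite (HS (@q3 R)); last by right; right.
    by rewrite !mulr0 !addr0.
  by move=> k _; rewrite lin1 q0V; ring.
have HC : \sum_k er k * nsq (q k) = -1.
  have := congr1 (@q0 R) Hcol; rewrite qc_sum; last by left.
  have -> : (-1 : R) = q0 (-1 : quat R) by [].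
  move=> <-; apply: eq_bigr => k _.
  by rewrite /e q0col.
rewrite (bigD1 m) // Lm {1}/er eqxx in HL.
rewrite (bigD1 m) // {1}/er eqxx in HC.
set N := nsq (q m) in HL HC.
set S := \sum_(k | k != m) _ in HC.
set T := \sum_(k | k != m) _ in HL.
have HS0 : 0 <= S.
  by apply: sumr_ge0 => k /negbTE hk; rewrite /er hk mul1r nsq_ge0.
have HT : T <= N * S.
  rewrite /T /S mulr_sumr; apply: ler_sum => k /negbTE hk; rewrite /er hk !mul1r.
  exact: Lbound.
have HC' : -1 * N + S = -1 := HC.
have HL' : -1 * N ^+ 2 + T = 0 := HL.
have HN : N = 1 + S by move: HC'; lra.
have HNT : N ^+ 2 = T by move: HL'; lra.
move: HT; rewrite -HNT HN => HT.
move: HT HS0; clearbody S; clear -S => HT HS0.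
have : (0:R) < 0 by nra.
by rewrite ltxx.
Qed.
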